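(* Let $F$, $H$, $K$ and $R$ be fixed monic polynomials in $\mathbb{F}_q[T]$ with $F\mid R$, and let $z$ be a non-negative integer with $z<\deg(R)$. Then \[ \sum_{\substack{A,B\in\mathbb{A}^+\\ \deg(AB)=z\\ AH\equiv BK\ (\mathrm{mod}\ F)\\ AH\neq BK\\ (ABHK,R)=1}}\frac{1}{|AB|^{\frac{1}{2}}}\ll\frac{q^{\frac{z}{2}}(z+1)|HK|}{|F|}. \]
   Context: $q$ is a power of an odd prime, $\mathbb{A}=\mathbb{F}_q[T]$, $\mathbb{A}^+$ is the set of monic polynomials in $\mathbb{A}$, and $|f|=q^{\deg(f)}$ for $f\in\mathbb{A}$. *)

(* Defs.v *)
From HB Require Import structures.
From mathcomp Require Import all_boot all_order all_algebra all_field.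
Set Implicit Arguments. Unset Strict Implicit. Unset Printing Implicit Defensive.
Import Order.TTheory GRing.Theory Num.Theory.
Local Open Scope ring_scope.

Definition pabs (R : rcfType) (Fq : finFieldType) (f : {poly Fq}) : R :=
  (#|Fq|%:R) ^+ (size f).-1.

(* The sum in Lemma 3.4.  Monic A, B with deg(AB) = z have size <= z+1,
   so we range over {poly_(z.+1) Fq} (a finite type). *)
Definition lhs34 (R : rcfType) (Fq : finFieldType)
    (F H K Rm : {poly Fq}) (z : nat) : R :=
  \sum_(A : {poly_(z.+1) Fq})
    \sum_(B : {poly_(z.+1) Fq} |
       [&& val A \is monic, val B \is monic,
           (size (val A * val B)).-1 == z,
           F %| (val A * H - val B * K),
           val A * H != val B * K &
           coprimep (val A * val B * H * K) Rm])
      1 / Num.sqrt (pabs R (val A * val B)).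

(* Main.v *)
Require Import Defs.
From HB Require Import structures.
From mathcomp Require Import all_boot all_order all_algebra all_field.
From mathcomp Require Import zify ring.
Set Implicit Arguments. Unset Strict Implicit. Unset Printing Implicit Defensive.
Import Order.TTheory GRing.Theory Num.Theory.
Local Open Scope ring_scope.
Lemma size_sub_monic (Fq : finFieldType) (B : {poly Fq}) : B \is monic ->
  (size (B - 'X^((size B).-1))%R <= (size B).-1)%N.
Proof.
move=> mB; apply/leq_sizeP => i hi; rewrite coefB coefXn.
rewrite leq_eqVlt in hi; case/orP: hi => [/eqP <- | hlt].
  by rewrite eqxx -lead_coefE (monicP mB) subrr.
rewrite (gtn_eqF hlt) nth_default ?subr0 //.
by move: hlt; case: (size B).
Qed.

Section Count.
Variables (Fq : finFieldType) (z : nat).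
Local Notation T := {poly_(z.+1) Fq}.

Definition T1 (F H K : {poly Fq}) : {set T * T} :=
  [set p : T * T | [&& val p.1 \is monic, val p.2 \is monic,
     (size (val p.1 * val p.2)).-1 == z, F %| val p.1 * H - val p.2 * K,
     coprimep H F & (size F <= size (val p.1 * H)%R)%N]].

Lemma monic_size_gt0 (p : {poly Fq}) : p \is monic -> (0 < size p)%N.
Proof. by move=> /monic_neq0; rewrite size_poly_gt0. Qed.

Lemma T1_card (F H K : {poly Fq}) : F \is monic -> H \is monic ->
  (#|T1 F H K| * #|Fq| ^ (size F).-1 <= z.+1 * #|Fq| ^ (z + size H))%N.
Proof.
move=> mF mH.
have F0 : F != 0 by apply: monic_neq0.
have H0 : H != 0 by apply: monic_neq0.
case: (set_0Vmem (T1 F H K)) => [-> | [[A0 B0] ]]; first by rewrite cards0.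
rewrite inE /= => /and5P [mA0 mB0 _ _ /andP [_ szF0]].
have hA0 : (size (val A0) <= z.+1)%N := size_npoly A0.
have szFH : (size F <= z + size H)%N.
  apply: (leq_trans szF0); rewrite size_monicM //. have := monic_size_gt0 mH. move: hA0. set a := size _. set b := size H. lia.
set n := (z + size H + 1 - size F)%N.
have -> : (z + size H = n + (size F).-1)%N.
  have := monic_size_gt0 mF; rewrite /n; lia.
have q0 : (0 < #|Fq|)%N by apply/card_gt0P; exists 0.
rewrite expnD mulnA leq_pmul2r ?expn_gt0 ?q0 //.
pose P (p : T * T) : {poly Fq} :=
  (val p.2 - 'X^((size (val p.2)).-1)) + 'X^((size (val p.2)).-1) * (val p.1 %/ F).
pose phi (p : T * T) : 'I_z.+1 * {poly_n Fq} :=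
  (inord (size (val p.2)).-1, npolyp n (P p)).
have szP : forall p, p \in T1 F H K -> (size (P p) <= n)%N /\
     (size ((val p.2 - 'X^((size (val p.2)).-1))%R) < (size (val p.2)).-1.+1)%N.
  move=> [A B]; rewrite inE /= => /and5P [mA mB /eqP szAB _ /andP [_ szF]].
  have hsub := size_sub_monic mB.
  split; last by rewrite ltnS.
  rewrite /P /=.
  apply: (leq_trans (size_polyD _ _)).
  have hm := size_mul_leq ('X^((size (val B)).-1)) (val A %/ F).
  rewrite size_polyXn size_divp // in hm.
  have hAB : size (val A * val B) = (size (val A) + size (val B)).-1 by rewrite size_monicM // monic_neq0.
  rewrite size_monicM // in szF.
  have := monic_size_gt0 mA. have := monic_size_gt0 mB. have := monic_size_gt0 mH.
  have := monic_size_gt0 mF. have := monic_size_gt0 (etrans (monicMl (val B) mA) mB).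
  move: hsub hm hAB szF szAB; rewrite /n.
  set sA := size (val A); set sB := size (val B); set sF := size F; set sH := size H.
  set sAB := size _; set sP := size _; set sQ := size _.
  rewrite geq_max. lia.
have inj : {in T1 F H K &, injective phi}.
  move=> [A1 B1] [A2 B2] in1 in2 [].
  have [h1P h1s] := szP _ in1; have [h2P h2s] := szP _ in2.
  move: in1 in2; rewrite !inE /= => /and5P [mA1 mB1 _ d1 /andP [cHF _]].
  move=> /and5P [mA2 mB2 _ d2 _].
  have sB1 := size_npoly B1; have sB2 := size_npoly B2.
  move=> /(congr1 (@nat_of_ord z.+1)) hb /(congr1 val) hP.
  rewrite !inordK in hb; last 2 first.
  - by move: sB2; case: (size _).
  - by move: sB1; case: (size _).
  rewrite /= !npolypK // /P /= -hb in hP.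
  move: h1s h2s hP; rewrite -hb; set b := (size (val B1)).-1 => h1s h2s hP.
  rewrite (addrC (val B1 - 'X^b)) (addrC (val B2 - 'X^b)) in hP.
  rewrite (mulrC 'X^b (val A1 %/ F)) (mulrC 'X^b (val A2 %/ F)) in hP.
  have eB := congr1 (fun p => p %% 'X^b) hP.
  have eQ := congr1 (fun p => p %/ 'X^b) hP.
  rewrite /= !modp_addl_mul_small ?size_polyXn // in eB.
  rewrite /= !divp_addl_mul_small ?size_polyXn // in eQ.
  have eB' : val B1 = val B2 by move/(congr1 (fun p => p + 'X^b)): eB; rewrite !subrK.
  have eR : val A1 %% F = val A2 %% F.
    have : F %| (val A1 - val A2) * H.
      rewrite mulrBl.
      have -> : (val A1 * H - val A2 * H = (val A1 * H - val B1 * K) - (val A2 * H - val B2 * K))%R.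
        by rewrite eB'; ring.
      by rewrite dvdp_sub.
    rewrite Gauss_dvdpl; last by rewrite coprimep_sym.
    move/modp_eq0; rewrite modpD modpN => /eqP; rewrite subr_eq0 => /eqP //.
  congr pair; apply: val_inj => //.
  by rewrite (divp_eq (val A1) F) (divp_eq (val A2) F) eQ eR.
rewrite -(card_in_imset inj).
apply: leq_trans (max_card _) _.
by rewrite card_prod card_ord card_npoly.
Qed.
End Count.
Arguments T1 : clear implicits.
Theorem lemma3p4 (R : rcfType) (Fq : finFieldType) :
  odd #|Fq| ->
  exists C : R, 0 < C /\
    forall (F H K Rm : {poly Fq}) (z : nat),
      F \is monic -> H \is monic -> K \is monic -> Rm \is monic ->
      F %| Rm -> (z < (size Rm).-1)%N ->
      lhs34 R F H K Rm z <=
        C * (Num.sqrt ((#|Fq|%:R : R) ^+ z) * (z.+1)%:R * pabs R (H * K)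
             / pabs R F).
Proof.
move=> _.
have q0 : (0 < #|Fq|)%N by apply/card_gt0P; exists 0.
exists (2 * #|Fq|)%:R; split; first by rewrite ltr0n muln_gt0 q0.
move=> F H K Rm z mF mH mK mR dFR _.
pose T := {poly_(z.+1) Fq}.
pose cond (A B : T) := [&& val A \is monic, val B \is monic,
           (size (val A * val B)).-1 == z,
           F %| (val A * H - val B * K),
           val A * H != val B * K &
           coprimep (val A * val B * H * K) Rm].
pose S := [set p : T * T | cond p.1 p.2].
set s := Num.sqrt _.
have eL : lhs34 R F H K Rm z = (#|S|)%:R * (1 / s).
  rewrite /lhs34 pair_big_dep /=.
  rewrite (eq_bigr (fun _ => 1 / s)); last first.
    move=> [A B] /= /and5P [_ _ /eqP sz _ _].
    by rewrite /pabs sz.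
  rewrite sumr_const mulr_natl; congr (_ *+ _).
  by apply: eq_card => p; rewrite inE.
pose S1 := [set p in S | (size F <= size (val p.1 * H)%R)%N].
pose S2 := [set p in S | (size F <= size (val p.2 * K)%R)%N].
have condE : forall A B, cond A B -> [/\ val A \is monic, val B \is monic,
    (size (val A * val B)).-1 = z, F %| (val A * H - val B * K) &
    (coprimep H F /\ coprimep K F)].
  move=> A B /and5P [mA mB /eqP sz dv /andP [_ cp]]; split => //; split.
    move: (coprimep_dvdl dFR cp); rewrite coprimepMl => /andP [+ _].
    by rewrite coprimepMl => /andP [_ ->].
  by move: (coprimep_dvdl dFR cp); rewrite coprimepMl => /andP [_ ->].
have sub : S \subset S1 :|: S2.
  apply/subsetP => p pS; rewrite in_setU [p \in S1]inE [p \in S2]inE pS /=.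
  move: pS; rewrite inE => /and5P [_ _ _ dv /andP [ne _]].
  have := dvdp_leq _ dv; rewrite subr_eq0 ne => /(_ isT) hF.
  have := leq_trans hF (size_polyD _ _); rewrite size_polyN leq_max.
  by [].
have c1 : (#|S1| <= #|T1 Fq z F H K|)%N.
  apply: subset_leq_card; apply/subsetP => p; rewrite !inE => /andP [pS ->].
  have [? ? ? ? [? ?]] := condE _ _ pS.
  by apply/and5P; split => //; [apply/eqP | apply/andP].
have c2 : (#|S2| <= #|T1 Fq z F K H|)%N.
  rewrite -(card_imset _ (can_inj (@swap_pairK T T))).
  apply: subset_leq_card; apply/subsetP => p /imsetP [[A B]].
  rewrite !inE /= => /andP [pS hsz] ->.
  have [? ? hs hd [? ?]] := condE _ _ pS.
  apply/and5P; split => //=.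
  - by rewrite mulrC hs.
  - by rewrite -dvdpNr opprB.
  - by apply/andP.
have sHK : (size (H * K)).-1 = ((size H).-1 + (size K).-1)%N.
  rewrite size_monicM ?monic_neq0 //.
  have := monic_size_gt0 mH; have := monic_size_gt0 mK; lia.
have key : (#|S| * #|Fq| ^ (size F).-1 <=
    2 * #|Fq| * z.+1 * #|Fq| ^ z * #|Fq| ^ (size (H*K)%R).-1)%N.
  have e1 : (#|Fq| ^ (z + size H) <= #|Fq| * #|Fq|^z * #|Fq| ^ (size (H*K)%R).-1)%N.
    rewrite -expnS -expnD leq_pexp2l // sHK.
    have := monic_size_gt0 mH; have := monic_size_gt0 mK; lia.
  have e2 : (#|Fq| ^ (z + size K) <= #|Fq| * #|Fq|^z * #|Fq| ^ (size (H*K)%R).-1)%N.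
    rewrite -expnS -expnD leq_pexp2l // sHK.
    have := monic_size_gt0 mH; have := monic_size_gt0 mK; lia.
  have t1 := T1_card z K mF mH; have t2 := T1_card z H mF mK.
  have u := leq_trans (subset_leq_card sub) (leq_card_setU S1 S2).1.
  move: e1 e2 t1 t2 u c1 c2.
  set a := (#|Fq| ^ (z + size H))%N; set b := (#|Fq| ^ (z + size K))%N.
  set Q := (#|Fq| ^ (size F).-1)%N. set M := (_ * _ * _)%N.
  set n1 := #|T1 _ _ _ _ _|; set n2 := #|T1 _ _ _ _ _|.
  move=> e1 e2 t1 t2 u c1 c2.
  have h1 : (#|S| * Q <= (#|S1| + #|S2|) * Q)%N by rewrite leq_mul2r u orbT.
  have h2 : (#|S1| * Q <= z.+1 * M)%N.
    by rewrite (leq_trans (leq_mul c1 (leqnn Q))) // (leq_trans t1) // leq_mul2l e1 orbT.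
  have h3 : (#|S2| * Q <= z.+1 * M)%N.
    by rewrite (leq_trans (leq_mul c2 (leqnn Q))) // (leq_trans t2) // leq_mul2l e2 orbT.
  rewrite /M in h2 h3 *. nia.
rewrite eL /pabs.
have s0 : 0 < s by rewrite sqrtr_gt0 exprn_gt0 // ltr0n.
have ss : s ^+ 2 = #|Fq|%:R ^+ z by rewrite sqr_sqrtr // exprn_ge0 // ler0n.
rewrite mul1r ler_pdivrMr //.
have qn0 : (#|Fq|%:R : R) != 0 by rewrite pnatr_eq0 -lt0n q0.
have -> : (2 * #|Fq|)%:R * (s * z.+1%:R * #|Fq|%:R ^+ (size (H * K)).-1 /
    #|Fq|%:R ^+ (size F).-1) * s =
    (2 * #|Fq| * z.+1 * #|Fq| ^ z * #|Fq| ^ (size (H*K)%R).-1)%:R /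
    (#|Fq| ^ (size F).-1)%:R :> R.
  rewrite !natrM !natrX -ss expr2; field.
  by rewrite expf_neq0.
rewrite ler_pdivlMr ?ltr0n ?expn_gt0 ?q0 // -natrM ler_nat.
exact key.
Qed.
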